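(* Let $\varepsilon>0$, grant (NormEq) with constant $C'$ and (Hi) with parameters $r$ and $\alpha$, and assume that the oracle is the Bayes rule, i.e. $f^*(x)=\mathrm{sign}(2\eta(x)-1)$ for all $x\in\mathcal X$. Then every $f\in F$ with $\|f-f^*\|_{L_2}\le r$ satisfies $\|f-f^*\|_{L_2}^2\le\frac2\alpha P\mathcal L_f$.
   Context: Setting: $F$ is a convex class of measurable functions $\mathcal X\to\mathbb R$, $\mathcal Y=\{-1,1\}$, $(X,Y)\sim P$, $X\sim\mu$, $\|g\|_{L_p}=(\mathbb E|g(X)|^p)^{1/p}$, $\eta(x)=\mathbb P(Y=1\mid X=x)$. The hinge loss is $\ell_f(x,y)=\max(1-yf(x),0)$. $f^*$ is the minimizer of $f\mapsto P\ell_f$ over $F$, $\mathcal L_f=\ell_f-\ell_{f^*}$, $P\mathcal L_f=\mathbb E\mathcal L_f(X,Y)$. (NormEq): there is $C'>0$ such that $\|f-f^*\|_{L_{2+\varepsilon}}\le C'\|f-f^*\|_{L_2}$ for all $f\in F$. (Hi): there exist $\alpha>0$ and $0<r\le(\sqrt2C')^{-(2+\varepsilon)/\varepsilon}$ such that for all $x\in\mathcal X$, $\min(\eta(x),1-\eta(x),|1-2\eta(x)|)\ge\alpha$. *)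

(* Defs.v *)
From HB Require Import structures.
From mathcomp Require Import all_boot all_order all_algebra.
From mathcomp Require Import all_classical all_reals all_analysis.
Set Implicit Arguments. Unset Strict Implicit. Unset Printing Implicit Defensive.
Import Order.TTheory GRing.Theory Num.Theory.
Local Open Scope classical_set_scope.
Local Open Scope ring_scope.

(* Labels Y in {-1,1} are encoded by bool: true <-> 1, false <-> -1. *)
Definition lab {R : realType} (b : bool) : R := if b then 1 else -1.

Section defs.
Context {d} {T : measurableType d} {R : realType}.

Definition hinge (f : T -> R) (z : T * bool) : R :=
  Num.max (1 - lab z.2 * f z.1) 0.

Definition risk (P : probability (T * bool)%type R) (f : T -> R) : \bar R :=
  (\int[P]_z (hinge f z)%:E)%E.

Definition excess_risk (P : probability (T * bool)%type R) (f fstar : T -> R) : \bar R :=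
  (risk P f - risk P fstar)%E.

Definition Lpnorm (P : probability (T * bool)%type R) (p : R) (g : T -> R) : \bar R :=
  Lnorm P p%:E (fun z => (g z.1)%:E).

(* eta is a version of x |-> P(Y = 1 | X = x) *)
Definition is_cond_prob (P : probability (T * bool)%type R) (eta : T -> R) : Prop :=
  measurable_fun setT eta /\
  forall A : set T, measurable A ->
    P (A `*` [set true]) = (\int[P]_(z in A `*` setT) (eta z.1)%:E)%E.

Definition convex_class (F : set (T -> R)) : Prop :=
  forall f g, F f -> F g -> forall t : R, 0 <= t <= 1 ->
    F (fun x => t * f x + (1 - t) * g x).

Definition measurable_class (F : set (T -> R)) : Prop :=
  forall f, F f -> measurable_fun setT f.

Definition risk_minimizer (P : probability (T * bool)%type R) (F : set (T -> R))
    (fstar : T -> R) : Prop :=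
  F fstar /\ forall f, F f -> (risk P fstar <= risk P f)%E.

Definition NormEq (P : probability (T * bool)%type R) (F : set (T -> R))
    (fstar : T -> R) (eps C' : R) : Prop :=
  0 < C' /\ forall f, F f ->
    (Lpnorm P (2 + eps) (fun x => (f x - fstar x)%R)
       <= C'%:E * Lpnorm P 2 (fun x => (f x - fstar x)%R))%E.

Definition Hi (eta : T -> R) (eps C' r alpha : R) : Prop :=
  0 < alpha /\ 0 < r /\ r <= (Num.sqrt 2 * C') `^ (- ((2 + eps) / eps)) /\
  forall x, alpha <= Num.min (eta x) (Num.min (1 - eta x) `|1 - 2 * eta x|).

End defs.

(* Main.v *)
Require Import Defs.
From HB Require Import structures.
From mathcomp Require Import all_boot all_order all_algebra.
From mathcomp Require Import all_classical all_reals all_analysis.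
Import Order.TTheory GRing.Theory Num.Theory.
Local Open Scope classical_set_scope.
Local Open Scope ring_scope.
From mathcomp Require Import measurable_realfun lra.
Import HBNNSimple.
Import numFieldNormedType.Exports.

Lemma indic_fst (T U : Type) (R : realType) (A : set T) (z : T * U) :
  \1_A z.1 = \1_(A `*` setT) z :> R.
Proof.
rewrite !indicE; case: (boolP (z.1 \in A)) => h.
  by rewrite mem_set//; split => //; exact/set_mem.
by rewrite memNset// => -[] /mem_set; rewrite (negbTE h).
Qed.
Lemma setX_fst (T U : Type) (A : set T) (B : set U) :
  A `*` B = (A `*` setT) `&` (setT `*` B).
Proof. by apply/seteqP; split => [z [] ? ?|z [] [] ? _ [] _ ?]. Qed.


Lemma Phi_pt (R : realType) (al e u s : R) : 0 < al -> al <= e -> al <= 1 - e ->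
  al <= `|1 - 2 * e| -> s = Num.sg (2 * e - 1) ->
  e * Num.max (1 - s) 0 + (1 - e) * Num.max (1 + s) 0 + al * `|u - s|
  <= e * Num.max (1 - u) 0 + (1 - e) * Num.max (1 + u) 0.
Proof.
move=> al0 h1 h2 h3 ->.
have a1 : 1 - u <= Num.max (1 - u) 0 by rewrite le_max lexx.
have a2 : 0 <= Num.max (1 - u) 0 by rewrite le_max lexx orbT.
have b1 : 1 + u <= Num.max (1 + u) 0 by rewrite le_max lexx.
have b2 : 0 <= Num.max (1 + u) 0 by rewrite le_max lexx orbT.
move: a1 a2 b1 b2; set M1 := Num.max (1 - u) 0; set M2 := Num.max (1 + u) 0 => a1 a2 b1 b2.
have e1 : 0 <= e by lra.
have t1 : 0 <= M1 - (1 - u) by lra.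
have t2 : 0 <= M2 - (1 + u) by lra.
have e2 : 0 <= 1 - e by lra.
have [pos|neg|z] := ltrgtP (2 * e - 1) 0.
- rewrite ltr0_sg //; rewrite gtr0_norm in h3; last lra.
  have -> : Num.max (1 - -1) 0 = 2 :> R by rewrite max_l; lra.
  have -> : Num.max (1 + -1) 0 = 0 :> R by rewrite max_r; lra.
  have [uh|ul] := lerP (-1) u.
  + have [uh2|ul2] := lerP u 1.
    * have := mulr_ge0 e1 t1.
      have := mulr_ge0 e2 t2. nra.
    * have := mulr_ge0 e1 a2.
      have := mulr_ge0 e2 t2. nra.
  + have := mulr_ge0 e1 t1.
    have := mulr_ge0 e2 b2. nra.
- rewrite gtr0_sg //; rewrite ltr0_norm in h3; last lra.
  have -> : Num.max (1 - 1) 0 = 0 :> R by rewrite max_r; lra.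
  have -> : Num.max (1 + 1) 0 = 2 :> R by rewrite max_l; lra.
  have [uh|ul] := lerP u 1.
  + have [uh2|ul2] := lerP (-1) u.
    * have := mulr_ge0 e1 t1.
      have := mulr_ge0 e2 t2. nra.
    * have := mulr_ge0 e1 t1.
      have := mulr_ge0 e2 b2. nra.
  + have := mulr_ge0 e1 a2.
    have := mulr_ge0 e2 t2. nra.
- have : 1 - 2 * e = 0 by lra.
  by move=> h; rewrite h normr0 in h3; lra.
Qed.


Lemma real_bound (R : realType) (eps C' r b : R) : 0 < eps -> 0 < C' -> 0 <= b -> b <= r ->
  r <= (Num.sqrt 2 * C') `^ (- ((2 + eps) / eps)) ->
  (C' * b) `^ (2 + eps) <= b `^ 2 / 2.
Proof.
move=> e0 C0 b0 br rle.
have pe : 2 + eps != 0 by rewrite gt_eqF//; lra.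
have [b00|bpos] := eqVneq b 0.
  by rewrite b00 mulr0 !powR0// mul0r.
have bp : 0 < b by rewrite lt_def bpos b0.
have s0 : 0 <= Num.sqrt 2 :> R by [].
have s1 : 1 <= Num.sqrt 2 :> R.
  have : Num.sqrt 1 <= Num.sqrt 2 :> R by rewrite ler_sqrt// ler1n.
  by rewrite sqrtr1.
set K := C' `^ (2 + eps); set S := Num.sqrt 2 `^ (2 + eps).
have K0 : 0 < K by apply: powR_gt0.
have S2 : 2 <= S.
  have : Num.sqrt 2 `^ 2 <= S by apply: ler_powR => //; lra.
  by rewrite powR_mulrn// sqr_sqrtr//; lra.
have S0 : 0 < S by lra.
have X1 : b `^ eps <= (S * K)^-1.
  apply: (le_trans (ge0_ler_powR (ltW e0) _ _ br)); rewrite ?nnegrE//; first by lra.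
  apply: (le_trans (ge0_ler_powR (ltW e0) _ _ rle)); rewrite ?nnegrE ?powR_ge0//; first by lra.
  rewrite -powRrM mulNr divfK ?gt_eqF// powRN powRM//; last exact: ltW.
have bb : b `^ (2 + eps) = b `^ eps * b `^ 2 by rewrite addrC powRD// bpos implybT.
rewrite powRM//; last exact: ltW.
rewrite -/K bb.
have KX : K * b `^ eps <= 2^-1.
  apply: (le_trans (ler_wpM2l (ltW K0) X1)).
  rewrite invfM mulrCA mulfV ?gt_eqF// mulr1.
  by rewrite lef_pV2 ?posrE//; lra.
rewrite mulrA mulrC.
have := powR_ge0 b 2; nra.
Qed.

Lemma pw_pt (R : realType) (eps x : R) : 0 < eps -> 0 <= x ->
  x `^ 2 <= x + x `^ (2 + eps).
Proof.
move=> e0 x0; have [x1|x1] := lerP x 1.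
  rewrite powR_mulrn// expr2; have := powR_ge0 x (2 + eps).
  have : x * x <= x by rewrite ler_piMl.
  lra.
have : x `^ 2 <= x `^ (2 + eps) by apply: ler_powR; lra.
lra.
Qed.

Section key.
Context d (T : measurableType d) (R : realType) (P : probability (T * bool)%type R).
Local Open Scope ereal_scope.

Lemma simple_eq (psi : T -> R) (b : bool) (mpsi : measurable_fun setT psi)
  (psi0 : forall x, (0 <= psi x)%R)
  (H : forall A, measurable A -> P (A `*` [set b]) = \int[P]_(z in A `*` setT) (psi z.1)%:E)
  (s : {nnsfun T >-> R}) :
  \int[P]_z (s z.1 * \1_(setT `*` [set b]) z)%:E = \int[P]_z (s z.1 * psi z.1)%:E.
Proof.
have mb : measurable (setT `*` [set b] : set (T * bool)).
  by apply: measurableX => //.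
have mA y : measurable (s @^-1` [set y]) by [].
have E1 c : (fun z => (s z.1 * c z)%:E) = (fun z => \sum_(y \in range s) (y * (\1_(s @^-1` [set y]) z.1 * c z))%:E).
  apply/funext => z; rewrite fsumEFin//; congr EFin.
  rewrite [in LHS]fimfunE mulr_fsuml; apply: eq_fsbigr => y _; by rewrite mulrA.
rewrite !E1 !ge0_integral_fsum//; last 4 first.
- move=> y; apply/measurable_EFinP; apply: measurable_funM => //.
  apply: measurable_funM; last exact: measurableT_comp.
  by apply: measurableT_comp => //; exact: measurable_indic.
- move=> y z _; rewrite lee_fin mulrA; apply: mulr_ge0 => //.
  by have := nnfun_muleindic_ge0 s y z.1; rewrite -EFinM lee_fin.
- move=> y; apply/measurable_EFinP; apply: measurable_funM => //.
  apply: measurable_funM; last exact: measurable_indic.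
  by apply: measurableT_comp => //; exact: measurable_indic.
- move=> y z _; rewrite lee_fin mulrA; apply: mulr_ge0 => //.
  by have := nnfun_muleindic_ge0 s y z.1; rewrite -EFinM lee_fin.
apply: eq_fsbigr => y; rewrite inE => -[x _ <-].
have sx0 : (0 <= s x)%R by [].
under eq_integral do rewrite EFinM.
under [RHS]eq_integral do rewrite EFinM.
have m1 : measurable_fun setT (EFin \o (fun z : T * bool => (\1_(s @^-1` [set s x]) z.1 * \1_([set: T] `*` [set b]) z : R)%R)).
  apply/measurable_EFinP; apply: measurable_funM; last exact: measurable_indic.
  by apply: measurableT_comp => //; exact: measurable_indic.
have m2 : measurable_fun setT (EFin \o (fun z : T * bool => (\1_(s @^-1` [set s x]) z.1 * psi z.1 : R)%R)).
  apply/measurable_EFinP; apply: measurable_funM; last exact: measurableT_comp.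
  by apply: measurableT_comp => //; exact: measurable_indic.
rewrite ge0_integralZl_EFin//; try by move=> z _; rewrite lee_fin; apply: mulr_ge0.
rewrite [RHS]ge0_integralZl_EFin//; try by move=> z _; rewrite lee_fin; apply: mulr_ge0.
congr (_ * _).
have mAb : measurable ((s @^-1` [set s x]) `*` [set b]) by apply: measurableX.
rewrite (eq_integral (fun z => (\1_((s @^-1` [set s x]) `*` [set b]) z)%:E)); last first.
  by move=> z _; rewrite [in RHS]setX_fst indicI /= indic_fst.
rewrite integral_indic// setIT; apply: eq_trans (H _ (mA (s x))) _.
rewrite [LHS]integral_mkcond epatch_indic; apply: eq_integral => z _ /=.
by rewrite mulrC EFinM indic_fst.
Qed.


Lemma cond_eq (psi : T -> R) (b : bool) (mpsi : measurable_fun setT psi)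
  (psi0 : forall x, (0 <= psi x)%R)
  (H : forall A, measurable A -> P (A `*` [set b]) = \int[P]_(z in A `*` setT) (psi z.1)%:E)
  (phi : T -> R) : measurable_fun setT phi -> (forall x, (0 <= phi x)%R) ->
  \int[P]_z (phi z.1 * \1_(setT `*` [set b]) z)%:E = \int[P]_z (phi z.1 * psi z.1)%:E.
Proof.
move=> mphi phi0.
have mb : measurable (setT `*` [set b] : set (T * bool)) by apply: measurableX.
have mphiE : measurable_fun setT (EFin \o phi) by apply/measurable_EFinP.
pose h := nnsfun_approx measurableT mphiE.
have hcvg x : (fun n => h n x : R) @ \oo --> (phi x : R).
  have p0 : forall y, setT y -> (0 <= (EFin \o phi) y)%E by move=> ? _; rewrite lee_fin.
  have := cvg_nnsfun_approx measurableT mphiE p0 (I : setT x).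
  by move/fine_cvgP => [_]; apply: cvg_trans; apply: near_eq_cvg; apply: nearW.
have gen (c : T * bool -> R) : measurable_fun setT c -> (forall z, (0 <= c z)%R) ->
    \int[P]_z (phi z.1 * c z)%:E = limn (fun n => \int[P]_z (h n z.1 * c z)%:E).
  move=> mc c0.
  rewrite -monotone_convergence//; last 3 first.
  - move=> n; apply/measurable_EFinP; apply: measurable_funM => //.
    by apply: measurableT_comp => //.
  - by move=> n z _; rewrite lee_fin; apply: mulr_ge0.
  - move=> z _ m n mn; rewrite lee_fin; apply: ler_wpM2r => //.
    by have := nd_nnsfun_approx measurableT mphiE mn => /lefP; apply.
  apply: eq_integral => z _; apply/esym/cvg_lim => //.
  apply: cvg_EFin; first by apply: nearW.
  by apply: cvgMl; exact: hcvg.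
rewrite !gen//; try exact: measurableT_comp; try exact: measurable_indic;
  try by move=> z; rewrite indicE.
by under eq_fun do rewrite (@simple_eq psi b mpsi psi0 H).
Qed.

Lemma H_false (eta : T -> R) (meta : measurable_fun setT eta)
  (eta0 : forall x, (0 <= eta x)%R) (eta1 : forall x, (eta x <= 1)%R)
  (Ht : forall A, measurable A -> P (A `*` [set true]) = \int[P]_(z in A `*` setT) (eta z.1)%:E)
  A : measurable A ->
  P (A `*` [set false]) = \int[P]_(z in A `*` setT) (1 - eta z.1)%:E.
Proof.
move=> mA.
have mAT : measurable (A `*` setT : set (T * bool)) by apply: measurableX.
have mAt : measurable (A `*` [set true] : set (T * bool)) by apply: measurableX.
have mAf : measurable (A `*` [set false] : set (T * bool)) by apply: measurableX.
have e1 : P (A `*` setT) = P (A `*` [set true]) + P (A `*` [set false]).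
  rewrite -measureU//; last first.
    by apply/seteqP; split => // -[t c] /= [[_ ->] [_]].
  congr (P _); apply/seteqP; split => [[t c] /= [At _]|[t c] /= [[At _]|[At _]]] //.
  by case: c; [left|right].
have e2 : P (A `*` setT) = \int[P]_(z in A `*` setT) (eta z.1)%:E +
    \int[P]_(z in A `*` setT) (1 - eta z.1)%:E.
  rewrite -ge0_integralD//; try (by move=> z _; rewrite lee_fin ?subr_ge0);
    try (by apply: measurable_funTS; apply/measurable_EFinP; apply: measurableT_comp);
    try (by apply: measurable_funTS; apply/measurable_EFinP; apply: measurable_funB => //; apply: measurableT_comp).
  under eq_integral do rewrite -EFinD subrKC.
  by rewrite (integral_cst P mAT 1) mul1e.
have fin : \int[P]_(z in A `*` setT) (eta z.1)%:E \is a fin_num.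
  by rewrite -Ht// fin_num_measure.
rewrite e2 in e1; rewrite Ht// in e1.
rewrite -[LHS](addeK _ fin) [X in X - _]addeC -e1.
by rewrite [X in X - _]addeC addeK.
Qed.

Definition Phi (eta u : T -> R) (x : T) : R :=
  (eta x * Num.max (1 - u x) 0 + (1 - eta x) * Num.max (1 + u x) 0)%R.

Lemma risk_Phi (eta : T -> R) (Hc : is_cond_prob P eta)
  (eta0 : forall x, (0 <= eta x)%R) (eta1 : forall x, (eta x <= 1)%R)
  (u : T -> R) (mu : measurable_fun setT u) :
  risk P u = \int[P]_z (Phi eta u z.1)%:E.
Proof.
case: Hc => meta Ht.
have mt : measurable (setT `*` [set true] : set (T * bool)) by apply: measurableX.
have mf : measurable (setT `*` [set false] : set (T * bool)) by apply: measurableX.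
pose a x := Num.max (1 - u x)%R 0%R; pose c x := Num.max (1 + u x)%R 0%R.
have ma : measurable_fun setT a.
  by apply: measurable_maxr => //; apply: measurable_funB.
have mc : measurable_fun setT c.
  by apply: measurable_maxr => //; apply: measurable_funD.
have a0 x : (0 <= a x)%R by rewrite /a le_max lexx orbT.
have c0 x : (0 <= c x)%R by rewrite /c le_max lexx orbT.
have hE z : hinge u z = (a z.1 * \1_(setT `*` [set true]) z + c z.1 * \1_(setT `*` [set false]) z)%R.
  case: z => t [] /=; rewrite /hinge /lab /= !indicE.
    rewrite mem_set// memNset; last by move=> [].
    by rewrite mulr1 mulr0 addr0 mul1r.
  rewrite memNset; last by move=> [].
  by rewrite mem_set// mulr1 mulr0 add0r mulN1r opprK.
rewrite /risk; under eq_integral do rewrite hE EFinD.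
rewrite ge0_integralD//; last 4 first.
- by move=> z _; rewrite lee_fin mulr_ge0.
- apply/measurable_EFinP; apply: measurable_funM; first exact: measurableT_comp.
  exact: measurable_indic.
- by move=> z _; rewrite lee_fin mulr_ge0.
- apply/measurable_EFinP; apply: measurable_funM; first exact: measurableT_comp.
  exact: measurable_indic.
rewrite (@cond_eq eta true meta eta0 Ht a ma a0).
have mneta : measurable_fun setT (fun x => 1 - eta x)%R by apply: measurable_funB.
have neta0 x : (0 <= 1 - eta x)%R by rewrite subr_ge0.
rewrite (@cond_eq _ false mneta neta0 (@H_false eta meta eta0 eta1 Ht) c mc c0).
rewrite -ge0_integralD//; last 4 first.
- by move=> z _; rewrite lee_fin mulr_ge0.
- by apply/measurable_EFinP; apply: measurable_funM; apply: measurableT_comp.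
- by move=> z _; rewrite lee_fin mulr_ge0.
- apply/measurable_EFinP; apply: measurable_funM; first exact: measurableT_comp.
  exact: (measurableT_comp mneta).
apply: eq_integral => z _; rewrite -EFinD /Phi.
by rewrite [X in (X + _)%R]mulrC [X in (_ + X)%R]mulrC.
Qed.

Lemma excess_ge (eta : T -> R) (Hc : is_cond_prob P eta) (al : R) (al0 : (0 < al)%R)
  (Hal : forall x, (al <= Num.min (eta x) (Num.min (1 - eta x) `|1 - 2 * eta x|))%R)
  (fs f : T -> R) (fsE : forall x, fs x = Num.sg (2 * eta x - 1))
  (mf : measurable_fun setT f) (mfs : measurable_fun setT fs) :
  al%:E * \int[P]_z (`|f z.1 - fs z.1|)%:E <= excess_risk P f fs.
Proof.
have H1 x : (al <= eta x)%R by have := Hal x; rewrite !le_min => /andP[].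
have H2 x : (al <= 1 - eta x)%R by have := Hal x; rewrite !le_min => /and3P[].
have H3 x : (al <= `|1 - 2 * eta x|)%R by have := Hal x; rewrite !le_min => /and3P[].
have eta0 x : (0 <= eta x)%R by have := H1 x; lra.
have eta1 x : (eta x <= 1)%R by have := H2 x; lra.
have meta : measurable_fun setT eta by case: Hc.
have mPhi u : measurable_fun setT u -> measurable_fun setT (Phi eta u).
  move=> mu; apply: measurable_funD; apply: measurable_funM => //.
  - by apply: measurable_maxr => //; apply: measurable_funB.
  - by apply: measurable_funB.
  - by apply: measurable_maxr => //; apply: measurable_funD.
have Phi0 u x : (0 <= Phi eta u x)%R.
  rewrite /Phi; apply: addr_ge0; apply: mulr_ge0; rewrite ?le_max ?lexx ?orbT//.
  by rewrite subr_ge0.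
have mg : measurable_fun setT (fun x => `|f x - fs x|)%R.
  by apply: measurableT_comp => //; apply: measurable_funB.
rewrite /excess_risk !(@risk_Phi eta Hc eta0 eta1)//.
have fin : \int[P]_z (Phi eta fs z.1)%:E \is a fin_num.
  rewrite ge0_fin_numE; last by apply: integral_ge0 => z _; rewrite lee_fin.
  apply: (@le_lt_trans _ _ (\int[P]_z (cst 2%:E) z)).
    apply: ge0_le_integral => //.
    - by move=> z _; rewrite lee_fin.
    - by apply/measurable_EFinP; apply: measurableT_comp => //; exact: mPhi.
    - move=> z _; rewrite lee_fin /Phi fsE.
      have := eta0 z.1; have := eta1 z.1.
      case: (sgrP (2 * eta z.1 - 1)%R) => _;
        rewrite ?(max_l, max_r) ?subr0 ?addr0; try lra.
  by rewrite integral_cst// -ge0_fin_numE ?mule_ge0// fin_numM// fin_num_measure.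
rewrite leeBrDl//.
rewrite -ge0_integralZl_EFin//; try (by move=> z _; rewrite lee_fin);
  try (by apply/measurable_EFinP; apply: measurableT_comp).
rewrite -ge0_integralD//; try (by move=> z _; rewrite lee_fin ?mulr_ge0);
  try (by apply/measurable_EFinP; apply: measurableT_comp => //; exact: mPhi);
  try (by apply/measurable_EFinP; apply: measurable_funM => //; apply: measurableT_comp).
under eq_integral do rewrite -EFinM -EFinD.
apply: ge0_le_integral => //.
- by move=> z _; rewrite lee_fin; apply: addr_ge0; [exact: Phi0|apply: mulr_ge0; [exact: ltW|]].
- apply/measurable_EFinP; apply: measurable_funD; first by apply: measurableT_comp => //; exact: mPhi.
  by apply: measurable_funM; [exact: measurable_cst|exact: (measurableT_comp mg)].
- by apply/measurable_EFinP; apply: measurableT_comp => //; exact: mPhi.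
move=> z _; rewrite lee_fin /Phi.
  exact: (@Phi_pt R al (eta z.1) (f z.1) (fs z.1) al0 (H1 z.1) (H2 z.1) (H3 z.1) (fsE z.1)).
- by move=> z _; apply: mule_ge0; rewrite lee_fin// ltW.
- apply: emeasurable_funM; first exact: measurable_cst.
  by apply/measurable_EFinP; exact: (measurableT_comp mg).
- by apply/measurable_EFinP; exact: (measurableT_comp mg).
- exact: ltW.
Qed.
End key.

Theorem theorem9 (d : measure_display) (T : measurableType d) (R : realType)
  (P : probability (T * bool)%type R) (eta : T -> R) (F : set (T -> R))
  (fstar : T -> R) (eps C' r alpha : R) :
  is_cond_prob P eta ->
  convex_class F -> measurable_class F ->
  risk_minimizer P F fstar ->
  0 < eps ->
  NormEq P F fstar eps C' ->
  Hi eta eps C' r alpha ->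
  (forall x, fstar x = Num.sg (2 * eta x - 1)) ->
  forall f, F f ->
    (Lpnorm P 2 (fun x => (f x - fstar x)%R) <= r%:E)%E ->
    (Lpnorm P 2 (fun x => (f x - fstar x)%R) * Lpnorm P 2 (fun x => (f x - fstar x)%R)
       <= (2 / alpha)%:E * excess_risk P f fstar)%E.
Proof.
move=> Hc convF measF [Ffs _] e0 [C0 NE] [al0 [r0 [rle Hal]]] fsE f Ff Nle.
have mf := measF f Ff; have mfs := measF fstar Ffs.
have exc := @excess_ge _ _ _ P eta Hc alpha al0 Hal fstar f fsE mf mfs.
have mg : measurable_fun setT (fun x => `|f x - fstar x|)%R.
  by apply: measurableT_comp => //; apply: measurable_funB.
have mgp p : measurable_fun setT (fun z : T * bool => `|f z.1 - fstar z.1| `^ p)%R.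
  exact: (measurableT_comp (measurable_powR p) (measurableT_comp mg measurable_fst)).
set A := (\int[P]_z (`|f z.1 - fstar z.1|)%:E)%E in exc.
set N2 := Lpnorm P 2 (fun x => (f x - fstar x)%R).
have N0 : (0 <= N2)%E by apply: Lnorm_ge0.
have Nfin : N2 \is a fin_num.
  by rewrite ge0_fin_numE// (le_lt_trans Nle) ?ltry.
set b := fine N2.
have Nb : N2 = b%:E by rewrite fineK.
have b0 : 0 <= b by rewrite -lee_fin -Nb.
have br : b <= r by rewrite -lee_fin -Nb.
have B : ((b `^ 2)%:E = \int[P]_z (`|f z.1 - fstar z.1| `^ 2)%:E)%E.
  rewrite -poweR_EFin -Nb /N2 /Lpnorm powR_Lnorm//; try by apply: eq_integral => z _; rewrite abse_EFin poweR_EFin.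
have Cc : (\int[P]_z (`|f z.1 - fstar z.1| `^ (2 + eps))%:E <= ((C' * b) `^ (2 + eps))%:E)%E.
  have h := NE f Ff; rewrite -/N2 Nb -EFinM in h.
  have pe : 2 + eps != 0 by rewrite gt_eqF//; lra.
  have ge : 0 <= 2 + eps by lra.
  have := @gt0_ler_poweR _ (2 + eps) ge _ _ _ _ h.
  rewrite /Lpnorm powR_Lnorm// poweR_EFin.
  under eq_integral do rewrite abse_EFin poweR_EFin.
  apply.
  - by rewrite in_itv/= Lnorm_ge0 leey.
  - by rewrite in_itv/= lee_fin leey mulr_ge0// ltW.
have pw : (\int[P]_z (`|f z.1 - fstar z.1| `^ 2)%:E <=
    A + \int[P]_z (`|f z.1 - fstar z.1| `^ (2 + eps))%:E)%E.
  rewrite /A -ge0_integralD//; try (by move=> z _; rewrite lee_fin ?powR_ge0);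
    try (by apply/measurable_EFinP; exact: mgp);
    try (by apply/measurable_EFinP; exact: (measurableT_comp mg)).
  apply: ge0_le_integral => //.
  - by apply/measurable_EFinP; exact: mgp.
  - apply: emeasurable_funD; apply/measurable_EFinP; first exact: (measurableT_comp mg).
    exact: mgp.
  - by move=> z _; rewrite -EFinD lee_fin pw_pt.
have rb := @real_bound R eps C' r b e0 C0 b0 br rle.
have key : ((b `^ 2)%:E <= A + (b `^ 2 / 2)%:E)%E.
  rewrite B; apply: (le_trans pw); rewrite leeD2l//.
  by apply: (le_trans Cc); rewrite lee_fin.
have A0 : (0 <= A)%E by apply: integral_ge0 => z _; rewrite lee_fin.
rewrite Nb -EFinM.
have a2 : (0 <= (2 / alpha)%:E)%E by rewrite lee_fin divr_ge0// ltW.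
apply: (le_trans _ (lee_wpmul2l a2 exc)).
rewrite muleA -EFinM divfK ?gt_eqF//.
clear exc pw; move: key A0; case: A => [a| |] //=; last by rewrite mulry gtr0_sg// mul1e leey.
rewrite -EFinD !lee_fin => key _.
have -> : b * b = b `^ 2 by rewrite powR_mulrn// expr2.
lra.
Qed.
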